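(* Let $(P,\le,\mu,\gamma)$ be a preordered heap with target multiplication $\tau(a,b)=\gamma(\mu(\gamma a,\gamma b))$. If $e\in P$ is a left identity or a right identity for $\mu$ (i.e. $\mu(e,a)\simeq a$ for all $a\in P$, or $\mu(a,e)\simeq a$ for all $a\in P$), then $e$ is a double-sided identity for $\mu$ (i.e. $\mu(e,a)\simeq a\simeq\mu(a,e)$ for all $a$) and $\gamma e$ is a double-sided identity for $\tau$ (i.e. $\tau(\gamma e,a)\simeq a\simeq\tau(a,\gamma e)$ for all $a$). Analogously, if $e\in P$ is a left or right identity for $\tau$, then $e$ is a double-sided identity for $\tau$ and $\gamma e$ is a double-sided identity for $\mu$.
   Context: A preordered heap is a structure $(P,\le,\mu,\gamma)$ where $(P,\le)$ is a preorder (reflexive and transitive relation); $\mu\colon P\times P\to P$ (source multiplication) is monotonic in both arguments; $\gamma\colon P\to P$ (involution) is antitone ($a\le b\Rightarrow \gamma b\le\gamma a$); and the following axioms hold: (A1) $\gamma(\gamma(a))=a$ for all $a$; (A2a) $\mu(a,\gamma(\mu(\gamma b,a)))\le b$ for all $a,b\in P$; (A2b) $\mu(\gamma(\mu(a,\gamma b)),a)\le b$ for all $a,b\in P$. For $a,b\in P$, $a\simeq b$ means $a\le b$ and $b\le a$. *)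

(* Defs.v *)
Record preordered_heap (P : Type) (le : P -> P -> Prop) (mu : P -> P -> P) (gamma : P -> P) : Prop := {
  ph_refl : forall a, le a a;
  ph_trans : forall a b c, le a b -> le b c -> le a c;
  ph_mu_mono : forall a a' b b', le a a' -> le b b' -> le (mu a b) (mu a' b');
  ph_gamma_anti : forall a b, le a b -> le (gamma b) (gamma a);
  ph_A1 : forall a, gamma (gamma a) = a;
  ph_A2a : forall a b, le (mu a (gamma (mu (gamma b) a))) b;
  ph_A2b : forall a b, le (mu (gamma (mu a (gamma b))) a) b
}.

Definition equiv {P : Type} (le : P -> P -> Prop) (a b : P) : Prop := le a b /\ le b a.

Definition tau {P : Type} (mu : P -> P -> P) (gamma : P -> P) (a b : P) : P :=
  gamma (mu (gamma a) (gamma b)).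

Definition left_identity {P : Type} (le : P -> P -> Prop) (m : P -> P -> P) (e : P) : Prop :=
  forall a, equiv le (m e a) a.
Definition right_identity {P : Type} (le : P -> P -> Prop) (m : P -> P -> P) (e : P) : Prop :=
  forall a, equiv le (m a e) a.
Definition two_sided_identity {P : Type} (le : P -> P -> Prop) (m : P -> P -> P) (e : P) : Prop :=
  forall a, equiv le (m e a) a /\ equiv le a (m a e).

(* Main.v *)
Require Import Defs.

Section S.
Variables (P : Type) (le : P -> P -> Prop) (mu : P -> P -> P) (gamma : P -> P).
Hypothesis H : preordered_heap P le mu gamma.

Lemma tr a b c : le a b -> le b c -> le a c.
Proof. apply (ph_trans _ _ _ _ H). Qed.

Lemma ga a b : le a b -> le (gamma b) (gamma a).
Proof. apply (ph_gamma_anti _ _ _ _ H). Qed.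

Lemma gg a : gamma (gamma a) = a.
Proof. apply (ph_A1 _ _ _ _ H). Qed.

Lemma rf a : le a a.
Proof. apply (ph_refl _ _ _ _ H). Qed.

Lemma mm a a' b b' : le a a' -> le b b' -> le (mu a b) (mu a' b').
Proof. apply (ph_mu_mono _ _ _ _ H). Qed.

Lemma left_two e : left_identity le mu e -> two_sided_identity le mu e.
Proof.
  intros L a. split; [apply L|]. split.
  -
    pose proof (ph_A2a _ _ _ _ H e (gamma a)) as A.
    destruct (L (gamma (mu (gamma (gamma a)) e))) as [_ L2].
    pose proof (tr _ _ _ L2 A) as B. apply ga in B. rewrite !gg in B. exact B.
  - pose proof (ph_A2b _ _ _ _ H e a) as A.
    destruct (L (gamma a)) as [L1 _].
    apply ga in L1. rewrite gg in L1.
    eapply tr; [|exact A]. apply mm; [exact L1|apply rf].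
Qed.

Lemma right_two e : right_identity le mu e -> two_sided_identity le mu e.
Proof.
  intros R a. split; [split|apply (conj (proj2 (R a)) (proj1 (R a)))].
  - pose proof (ph_A2a _ _ _ _ H e a) as A.
    destruct (R (gamma a)) as [R1 _].
    apply ga in R1. rewrite gg in R1.
    eapply tr; [|exact A]. apply mm; [apply rf|exact R1].
  - pose proof (ph_A2b _ _ _ _ H e (gamma a)) as A.
    destruct (R (gamma (mu e (gamma (gamma a))))) as [_ R2].
    pose proof (tr _ _ _ R2 A) as B. apply ga in B. rewrite !gg in B. exact B.
Qed.

Lemma tau_two e : two_sided_identity le mu e -> two_sided_identity le (tau mu gamma) (gamma e).
Proof.
  intros T a. unfold tau. rewrite gg.
  destruct (T (gamma a)) as [[A1 A2] [A3 A4]].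
  split; split.
  - apply ga in A2. rewrite gg in A2. exact A2.
  - apply ga in A1. rewrite gg in A1. exact A1.
  - apply ga in A4. rewrite gg in A4. exact A4.
  - apply ga in A3. rewrite gg in A3. exact A3.
Qed.

Lemma tau_left e : left_identity le (tau mu gamma) e -> left_identity le mu (gamma e).
Proof.
  intros L a. destruct (L (gamma a)) as [A1 A2]. unfold tau in *.
  rewrite gg in A1, A2. apply ga in A1. apply ga in A2. rewrite !gg in A1. rewrite !gg in A2.
  split; assumption.
Qed.

Lemma tau_right e : right_identity le (tau mu gamma) e -> right_identity le mu (gamma e).
Proof.
  intros L a. destruct (L (gamma a)) as [A1 A2]. unfold tau in *.
  rewrite gg in A1, A2. apply ga in A1. apply ga in A2. rewrite !gg in A1. rewrite !gg in A2.
  split; assumption.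
Qed.
End S.

Theorem corollary2 (P : Type) (le : P -> P -> Prop) (mu : P -> P -> P) (gamma : P -> P)
  (H : preordered_heap P le mu gamma) (e : P) :
  ((left_identity le mu e \/ right_identity le mu e) ->
     two_sided_identity le mu e /\ two_sided_identity le (tau mu gamma) (gamma e)) /\
  ((left_identity le (tau mu gamma) e \/ right_identity le (tau mu gamma) e) ->
     two_sided_identity le (tau mu gamma) e /\ two_sided_identity le mu (gamma e)).
Proof.
  split.
  - intros D. assert (T : two_sided_identity le mu e)
      by (destruct D; [apply (@left_two P le mu gamma H)|apply (@right_two P le mu gamma H)]; auto).
    split; [exact T | apply (@tau_two P le mu gamma H); auto].
  - intros D. assert (T : two_sided_identity le mu (gamma e))
      by (destruct D; [apply (@left_two P le mu gamma H), (@tau_left P le mu gamma H)|apply (@right_two P le mu gamma H), (@tau_right P le mu gamma H)]; auto).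
    split; [|exact T].
    pose proof (@tau_two P le mu gamma H _ T) as T2. rewrite (ph_A1 _ _ _ _ H) in T2. exact T2.
Qed.
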